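(* Let $n,k,l$ be positive integers with $1\le l\le k$ and $l\le n-k$. Then for every $x\in[0,1)$, $$\frac{1-\sum_{i=1}^{l}\binom{n-k}{l-i}x^{(n-k)-(l-i)}(1-x)^{l-i}}{1-\sum_{i=1}^{l}\binom{n}{l-i}x^{n-(l-i)}(1-x)^{l-i}}\ \ge\ \frac{\binom{n-k}{l}}{\binom{n}{l}}.$$
   Context: $\binom{m}{j}$ denotes the binomial coefficient. *)

(* Defs.v *)
From mathcomp Require Import all_boot all_order all_algebra.
Set Implicit Arguments. Unset Strict Implicit. Unset Printing Implicit Defensive.
Import Order.TTheory GRing.Theory Num.Theory.
Local Open Scope ring_scope.

Definition tailsum (R : realFieldType) (m l : nat) (x : R) : R :=
  \sum_(1 <= i < l.+1) ('C(m, l - i))%:R * x ^+ (m - (l - i)) * (1 - x) ^+ (l - i).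

(* Main.v *)
Require Import Defs.
From mathcomp Require Import all_boot all_order all_algebra.
From mathcomp Require Import zify ring lra.
Import Order.TTheory GRing.Theory Num.Theory.
Local Open Scope ring_scope.

Definition TT (R : realFieldType) (m L : nat) (x : R) : R :=
  \sum_(j < L.+1) ('C(m, j))%:R * x ^+ (m - j) * (1 - x) ^+ j.

Arguments TT {R}.

Lemma tailsumE (R : realFieldType) m L (x : R) : tailsum m L.+1 x = TT m L x.
Proof.
rewrite /tailsum big_add1 /= big_mkord (reindex_inj rev_ord_inj) /=.
apply: eq_bigr => i _.
have -> : (L.+1 - (L.+1 - i.+1).+1 = i)%N by have := ltn_ord i; lia.
by [].
Qed.

Lemma TT_L (R : realFieldType) L (x : R) : TT L L x = 1.
Proof.
have := exprDn x (1 - x) L.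
rewrite (_ : x + (1 - x) = 1); last by rewrite addrC subrK.
rewrite expr1n => ->; rewrite /TT; apply: eq_bigr => i _.
by rewrite -mulrA mulr_natl.
Qed.

Lemma TT_step (R : realFieldType) m L (x : R) :
  TT m.+1 L x = TT m L x - ('C(m, L))%:R * x ^+ (m - L) * (1 - x) ^+ L.+1.
Proof.
set y := 1 - x.
have hxy : x + y = 1 by rewrite /y addrC subrK.
set A := \sum_(i < L) ('C(m, i.+1))%:R * x ^+ (m - i) * y ^+ i.+1.
set B := \sum_(i < L) ('C(m, i))%:R * x ^+ (m - i) * y ^+ i.+1.
have e1 : TT m.+1 L x = x ^+ m.+1 + (A + B).
  rewrite /TT big_ord_recl /= bin0 subn0 expr0 mul1r mulr1 -big_split /=.
  congr (_ + _); apply: eq_bigr => i _.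
  by rewrite binS natrD subSS mulrDl mulrDl /bump /= ?add1n.
have e2 : x * TT m L x = x ^+ m.+1 + A.
  rewrite /TT big_ord_recl mulrDr mulr_sumr /= bin0 subn0 expr0 mul1r mulr1 -exprS.
  congr (_ + _); apply: eq_bigr => i _; rewrite /bump /= ?add1n.
  case: (ltnP i m) => h.
    have -> : (m - i = (m - i.+1).+1)%N by lia.
    by rewrite [x ^+ (m - i.+1).+1]exprS !mulrA [x * _]mulrC.
  by rewrite bin_small ?ltnS // mulr0n !mul0r mulr0.
have e3 : y * TT m L x = B + ('C(m, L))%:R * x ^+ (m - L) * y ^+ L.+1.
  rewrite /TT big_ord_recr mulrDr mulr_sumr /=.
  congr (_ + _); [apply: eq_bigr => i _|]; rewrite exprS; ring.
have eT : TT m L x = x * TT m L x + y * TT m L x by rewrite -mulrDl hxy mul1r.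
rewrite e1 eT e2 e3; ring.
Qed.

Section S.
Variables (R : realFieldType) (L : nat) (x : R).
Hypotheses (x0 : 0 <= x) (x1 : x < 1).
Let S m := 1 - TT m L x.

Lemma S_step m : S m.+1 = S m + ('C(m, L))%:R * x ^+ (m - L) * (1 - x) ^+ L.+1.
Proof. rewrite /S TT_step; ring. Qed.

Lemma y_gt0 : 0 < 1 - x.
Proof. by rewrite subr_gt0. Qed.

Lemma D_ge0 m : 0 <= ('C(m, L))%:R * x ^+ (m - L) * (1 - x) ^+ L.+1.
Proof.
by rewrite !mulr_ge0 ?ler0n ?exprn_ge0 // ltW // y_gt0.
Qed.

Lemma S_low d : ('C(L + d, L.+1))%:R * x ^+ (L + d - L) * (1 - x) ^+ L.+1 <= S (L + d).
Proof.
elim: d => [|d IH].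
  by rewrite addn0 bin_small // !mul0r /S TT_L subrr.
rewrite addnS S_step binS natrD.
have -> : ((L + d).+1 - L = (L + d - L).+1)%N by lia.
rewrite [x ^+ (L + d - L).+1]exprS.
set c1 := ('C(L + d, L.+1))%:R in IH *.
set c2 := ('C(L + d, L))%:R.
set p := x ^+ (L + d - L). set q := (1 - x) ^+ L.+1.
have ha : 0 <= c1 * p * q by rewrite !mulr_ge0 ?ler0n ?exprn_ge0 // ltW // y_gt0.
have hb : 0 <= c2 * p * q by rewrite !mulr_ge0 ?ler0n ?exprn_ge0 // ltW // y_gt0.
have -> : (c1 + c2) * (x * p) * q = x * (c1 * p * q + c2 * p * q) by ring.
apply: (le_trans (ler_piMl (addr_ge0 ha hb) (ltW x1))).
by rewrite lerD2r.
Qed.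

Lemma S_pos d : 0 < S (L.+1 + d).
Proof.
elim: d => [|d IH].
  rewrite addn0 S_step /S TT_L subrr add0r subnn expr0 mulr1.
  by rewrite binn mul1r exprn_gt0 // y_gt0.
by rewrite addnS S_step; apply: (lt_le_trans IH); rewrite lerDl D_ge0.
Qed.

Lemma S_Q d : ('C(L + d, L.+1))%:R * S (L + d).+1 <= ('C((L + d).+1, L.+1))%:R * S (L + d).
Proof.
have h := S_low d.
rewrite S_step binS natrD.
set c1 := ('C(L + d, L.+1))%:R in h *.
set c2 := ('C(L + d, L))%:R.
set p := x ^+ (L + d - L). set q := (1 - x) ^+ L.+1.
have hc2 : 0 <= c2 by rewrite ler0n.
have := ler_wpM2l hc2 h.
set s := S (L + d).
have -> : c1 * (s + c2 * p * q) = c1 * s + c2 * (c1 * p * q) by ring.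
by move=> h2; rewrite mulrDl lerD2l.
Qed.

Lemma S_chain M d : (L < M)%N ->
  ('C(M, L.+1))%:R * S (M + d) <= ('C(M + d, L.+1))%:R * S M.
Proof.
move=> hM; elim: d => [|d IH]; first by rewrite addn0.
have hq := S_Q (M + d - L).
rewrite (_ : (L + (M + d - L) = M + d)%N) in hq; last by lia.
rewrite addnS.
set a := ('C(M, L.+1))%:R in IH *.
set c := ('C(M + d, L.+1))%:R in IH hq *.
set c' := ('C((M + d).+1, L.+1))%:R in hq *.
have hc : 0 < c by rewrite ltr0n bin_gt0; lia.
have ha : 0 <= a by rewrite ler0n.
have hc' : 0 <= c' by rewrite ler0n.
rewrite -(ler_pM2l hc).
rewrite (_ : c * (a * S (M + d).+1) = a * (c * S (M + d).+1)); last by ring.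
apply: (le_trans (ler_wpM2l ha hq)).
have := ler_wpM2l hc' IH.
have -> : a * (c' * S (M + d)) = c' * (a * S (M + d)) by ring.
move=> h; apply: (le_trans h); rewrite (le_eqVlt); apply/orP; left; apply/eqP; ring.
Qed.

End S.

Theorem lemma6 (R : realFieldType) (n k l : nat) (x : R) :
  (0 < n)%N -> (0 < k)%N -> (0 < l)%N -> (1 <= l <= k)%N -> (l <= n - k)%N ->
  0 <= x < 1 ->
  ('C(n - k, l))%:R / ('C(n, l))%:R
    <= (1 - tailsum (n - k) l x) / (1 - tailsum n l x).
Proof.
move=> hn hk hl hlk hln /andP [x0 x1].
case: l hl hlk hln => // L _ hlk hln.
rewrite !tailsumE.
have hS : 0 < 1 - TT n L x.
  have := @S_pos R L x x0 x1 (n - L.+1); have -> : (L.+1 + (n - L.+1) = n)%N by lia.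
  by [].
have hC : 0 < ('C(n, L.+1))%:R :> R by rewrite ltr0n bin_gt0; lia.
rewrite ler_pdivrMr // mulrAC ler_pdivlMr //.
have := @S_chain R L x x0 x1 (n - k) k ltac:(lia).
have -> : (n - k + k = n)%N by lia.
by rewrite (mulrC (1 - TT (n - k) L x)).
Qed.
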